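(* Let $G$ be a Cayley graph of a finite group $\Gamma$ that is nilpotent of class $\le n$, and let $r\ge 2^{n+1}$. If $G$ has an $r$-local cutvertex, then $G$ is a cycle of length greater than $r$ and $\Gamma$ is cyclic.
   Context: A generating set $S$ does not contain the neutral element $\mathbb{I}$ and is closed under inverses; the Cayley graph $\mathrm{Cay}(\Gamma,S)$ is the simple graph on $\Gamma$ with edges $\{g,gs\}$, $g\in\Gamma$, $s\in S$. $a\equiv b$ means $a=b$ or $a=b^{-1}$. Iterated commutators: $[g,h]_1:=gh^{-1}g^{-1}h$, $[g,h]_n$ the reduced form of $g[g,h]_{n-1}^{-1}g^{-1}[g,h]_{n-1}$; $\Gamma$ is nilpotent of class $\le n$ if $[g,h]_n=\mathbb{I}$ for all $g\not\equiv h$ in $\Gamma$. The ball $B_r(v)$ around a vertex $v$ is the subgraph consisting of all vertices and edges on closed walks of length at most $r$ through $v$; $v$ is an $r$-local cutvertex if $B_r(v)-v$ is disconnected. *)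

(* Defs.v *)
From mathcomp Require Import all_boot all_fingroup all_solvable.
From Stdlib Require Import Relations.
Set Implicit Arguments. Unset Strict Implicit. Unset Printing Implicit Defensive.
Local Open Scope group_scope.

Section Defs.
Variable gT : finGroupType.

Definition generating_set (S : {set gT}) : Prop :=
  [/\ 1 \notin S, (forall s, s \in S -> s^-1 \in S) & <<S>> = [set: gT]].

Definition cay (S : {set gT}) : rel gT :=
  fun g h => (g != h) && (g^-1 * h \in S).

(* Iterated commutators: icomm g h 0 = h, so icomm g h 1 = g h^-1 g^-1 h
   = [g,h]_1, and icomm g h k.+1 = g c^-1 g^-1 c with c = icomm g h k. *)
Fixpoint icomm (g h : gT) (k : nat) : gT :=
  match k with
  | 0 => h
  | k'.+1 => let c := icomm g h k' in g * c^-1 * g^-1 * c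
  end.

Definition nil_class_le (n : nat) : Prop :=
  forall g h : gT, g != h -> g != h^-1 -> icomm g h n = 1.

Definition closed_walk (S : {set gT}) (r : nat) (v : gT) (p : seq gT) : bool :=
  [&& path (cay S) v p, last v p == v & size p <= r].

Definition ball_vertex S r v x : Prop :=
  exists p, closed_walk S r v p /\ x \in v :: p.

Definition ball_edge S r v x y : Prop :=
  exists p, closed_walk S r v p /\
    exists p1 p2, v :: p = p1 ++ x :: y :: p2 \/ v :: p = p1 ++ y :: x :: p2.

Definition ball_minus_edge S r v x y : Prop :=
  x != v /\ y != v /\ ball_edge S r v x y.

Definition local_cutvertex S r v : Prop :=
  exists x y, [/\ ball_vertex S r v x, x != v, ball_vertex S r v y, y != v &
    ~ clos_refl_trans gT (ball_minus_edge S r v) x y].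

Definition cay_is_cycle (S : {set gT}) : Prop :=
  (forall x y, connect (cay S) x y) /\ (forall x, #|[set y | cay S x y]| = 2).
End Defs.

(* Main.v *)
Require Import Defs.
From mathcomp Require Import all_boot all_fingroup all_solvable.
From Stdlib Require Import Relations Classical Lia.
From mathcomp Require Import zify.
Set Implicit Arguments. Unset Strict Implicit. Unset Printing Implicit Defensive.

Section Basics.
Local Open Scope group_scope.
Variable gT : finGroupType.
Variable S : {set gT}.
Variable r : nat.

Definition conn (c a b : gT) := clos_refl_trans gT (ball_minus_edge S r c) a b.

Lemma ball_edge_sym c a b : ball_edge S r c a b -> ball_edge S r c b a.
Proof.
case=> p [cw [p1 [p2 H]]]; exists p; split=> //; exists p1, p2; tauto.
Qed.

Lemma conn_refl c a : conn c a a.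
Proof. exact: rt_refl. Qed.

Lemma conn_trans c a b d : conn c a b -> conn c b d -> conn c a d.
Proof. exact: rt_trans. Qed.

Lemma conn_sym c a b : conn c a b -> conn c b a.
Proof.
elim=> [x y [h1 [h2 h3]]| x | x y z _ IH1 _ IH2].
- by apply: rt_step; split=> //; split=> //; apply: ball_edge_sym.
- exact: rt_refl.
- exact: rt_trans IH2 IH1.
Qed.

Lemma cay_transl g x y : cay S (g * x) (g * y) = cay S x y.
Proof.
by rewrite /cay (inj_eq (mulgI g)) invMg -mulgA (mulgA g^-1) mulVg mul1g.
Qed.

Lemma path_transl g v p : path (cay S) (g * v) (map (mulg g) p) = path (cay S) v p.
Proof. by elim: p v => //= a p IH v; rewrite cay_transl IH. Qed.

Lemma ball_edge_transl g c a b : ball_edge S r c a b -> ball_edge S r (g * c) (g * a) (g * b).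
Proof.
case=> p [/and3P [pp lp sp] [p1 [p2 H]]].
exists (map (mulg g) p); split.
  apply/and3P; split; first by rewrite path_transl.
    by rewrite last_map (eqP lp).
  by rewrite size_map.
exists (map (mulg g) p1), (map (mulg g) p2).
case: H => H; [left|right]; by rewrite -map_cons H map_cat.
Qed.

Lemma conn_transl g c a b : conn c a b -> conn (g * c) (g * a) (g * b).
Proof.
elim=> [x y [h1 [h2 h3]]| x | x y z _ IH1 _ IH2].
- apply: rt_step; split; first by rewrite (inj_eq (mulgI g)).
  split; first by rewrite (inj_eq (mulgI g)).
  exact: ball_edge_transl.
- exact: rt_refl.
- exact: rt_trans IH1 IH2.
Qed.

Lemma conn_shift c d a b : conn c (c * a) (c * b) -> conn d (d * a) (d * b).
Proof.
move=> /(conn_transl (d * c^-1)).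
by rewrite !mulgA !mulgKV.
Qed.

End Basics.

Section Walks.
Local Open Scope group_scope.
Variable gT : finGroupType.
Variable S : {set gT}.
Variable r : nat.

Definition cw (v : gT) (L : nat) (x : nat -> gT) :=
  [/\ x 0 = v, x L = v, L <= r & forall k, k < L -> cay S (x k) (x k.+1)].

Lemma mkseq_add (T : Type) (f : nat -> T) a b :
  mkseq f (a + b) = mkseq f a ++ mkseq (fun q => f (a + q)) b.
Proof.
rewrite /mkseq iotaD map_cat add0n; congr (_ ++ _).
by rewrite -[in iota a b](addn0 a) iotaDl -map_comp.
Qed.

Lemma mkseq_cons (T : Type) (f : nat -> T) n :
  mkseq f n.+1 = f 0 :: mkseq (fun q => f q.+1) n.
Proof. by rewrite -add1n mkseq_add. Qed.

Lemma cw_closed v L x : cw v L x -> closed_walk S r v (mkseq (fun k => x k.+1) L).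
Proof.
case=> x0 xL Lr xe; apply/and3P; split.
- apply/(pathP v) => i; rewrite size_mkseq => iL.
  rewrite nth_mkseq //; case: i iL => [|i] iL /=; first by rewrite -x0; exact: xe.
  by rewrite nth_mkseq ?(ltnW iL) //; exact: xe.
- rewrite (last_nth v) size_mkseq; case: L xL {Lr xe} => [|L] /= xL; first by [].
  by rewrite nth_mkseq // xL.
- by rewrite size_mkseq.
Qed.

Lemma cw_seq v L x : cw v L x -> v :: mkseq (fun k => x k.+1) L = mkseq x L.+1.
Proof. by case=> x0 _ _ _; rewrite mkseq_cons x0. Qed.

Lemma cw_edge v L x k : cw v L x -> k < L -> ball_edge S r v (x k) (x k.+1).
Proof.
move=> c kL; exists (mkseq (fun k => x k.+1) L); split; first exact: cw_closed.
exists (mkseq x k), (mkseq (fun q => x (k.+2 + q)) (L - k.+1)); left.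
rewrite (cw_seq c).
have -> : L.+1 = k + (L - k.+1).+2 by lia.
rewrite mkseq_add; congr (_ ++ _).
rewrite !mkseq_cons addn0 addn1 /=; congr (_ :: _ :: _); apply: eq_mkseq => q.
by congr x; lia.
Qed.

Lemma cw_chain v L x a b : cw v L x -> a <= b -> b <= L ->
  (forall k, a <= k <= b -> x k != v) -> conn S r v (x a) (x b).
Proof.
move=> c; elim: b => [|b IH] ab bL' H.
  by rewrite leqn0 in ab; rewrite (eqP ab); exact: conn_refl.
case: (ltngtP a b.+1) ab => // [ab|<-] _; last exact: conn_refl.
have bL : b < L by [].
have ab' : a <= b by [].
apply: (conn_trans (IH ab' (ltnW bL) _)).
  by move=> k /andP [h1 h2]; apply: H; rewrite h1 /= ltnW.
apply: rt_step; split; first by apply: H; rewrite ab' /=.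
split; first by apply: H; rewrite leqnn andbT ltnW.
exact: (cw_edge c bL).
Qed.
End Walks.

Section Window.
Local Open Scope group_scope.
Variable gT : finGroupType.
Variable S : {set gT}.
Variable r : nat.

Lemma min_window v L x : cw S r v L x -> 0 < L ->
  exists i j, [/\ i < j, j <= L, x i = x j &
    forall k, i < k < j -> conn S r (x k) (x k.-1) (x k.+1)].
Proof.
move=> c L0; case: (c) => x0 xL Lr xe.
pose P d := [exists i : 'I_L.+1, (0 < d) && (i + d <= L) && (x i == x (i + d))].
have PL : exists d, P d.
  exists L; rewrite /P; apply/existsP; exists ord0.
  by rewrite /= add0n leqnn xL x0 eqxx L0.
case: (ex_minnP PL) => d /existsP [i /andP [/andP [d0 idL] /eqP xij]] dmin.
have iL : i <= L by rewrite -ltnS ltn_ord.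
set j := i + d.
have dist : forall p q, i <= p -> p < q -> q <= j -> q - p < d -> x p != x q.
  move=> p q ip pq qj qpd; apply/negP => /eqP xpq.
  have pL : p < L.+1 by lia.
  have : P (q - p).
    rewrite /P; apply/existsP; exists (Ordinal pL).
    rewrite /=; apply/andP; split; first (apply/andP; split).
    + by rewrite subn_gt0.
    + lia.
    + by rewrite subnKC ?(ltnW pq) // xpq.
  by move/dmin; rewrite leqNgt qpd.
exists i, j; split => //.
- by rewrite /j -{1}(addn0 i) ltn_add2l.
move=> k /andP [ik kj].
pose z l := if k + l <= j then x (k + l) else x (k + l - d).
have d2 : 1 < d by lia.
have cz : cw S r (x k) d z.
  split.
  - by rewrite /z addn0 ltnW.
  - have h1 : (k + d <= j) = false by apply/negbTE; rewrite -ltnNge; lia.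
    by rewrite /z h1; congr x; lia.
  - by apply: leq_trans Lr; apply: leq_trans idL; rewrite leq_addl.
  move=> l ld; rewrite /z.

  case: (ltngtP (k + l) j) => h.
  - have h1 : k + l <= j by lia.
    have h2 : k + l.+1 <= j by lia.
    rewrite ?h1 ?h2 /= addnS; apply: xe; lia.
  - have h1 : (k + l <= j) = false by apply/negbTE; rewrite -ltnNge; lia.
    have h2 : (k + l.+1 <= j) = false by apply/negbTE; rewrite -ltnNge; lia.
    rewrite ?h1 ?h2 /=.
    have -> : k + l.+1 - d = (k + l - d).+1 by lia.
    apply: xe; lia.
  - have h1 : k + l <= j by lia.
    have h2 : (k + l.+1 <= j) = false by apply/negbTE; rewrite -ltnNge; lia.
    rewrite ?h1 ?h2 /= h -xij /j.
    have -> : k + l.+1 - d = i.+1 by lia.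
    apply: xe; lia.
have nc : forall l, 1 <= l <= d.-1 -> z l != x k.
  move=> l /andP [l1 l2]; rewrite /z.
  case: ifP => h.
  - rewrite eq_sym; apply: dist; lia.
  - apply: dist; lia.
have := cw_chain cz (_ : (1 <= d.-1)%N) (_ : (d.-1 <= d)%N) nc.
have -> : z 1%N = x k.+1 by rewrite /z ifT ?addn1 //; lia.
have -> : z d.-1 = x k.-1.
  rewrite /z; case: ifP => h.
  - have -> : k + d.-1 = j by lia.
    rewrite -xij; congr x; lia.
  - congr x; lia.
move=> H; apply: conn_sym; apply: H; lia.
Qed.
End Window.

Section WordsD.


Definition flipl (l : bool * bool) := (l.1, ~~ l.2).

Fixpoint Ws k : seq (bool * bool) :=
  match k with
  | 0 => [:: (false, true); (true, false); (false, false); (true, true)]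
  | k'.+1 => (false, true) :: rev (map flipl (Ws k')) ++ behead (Ws k')
  end.

Definition dl := (false, true).

Lemma Ws_cons k : Ws k = (false, true) :: behead (Ws k).
Proof. by case: k. Qed.

Lemma size_Ws k : size (Ws k) = 2 ^ k.+2.
Proof.
elim: k => // k IH /=.
rewrite size_cat size_rev size_map size_behead IH [in RHS]expnS.
have : 0 < 2 ^ k.+2 by rewrite expn_gt0.
lia.
Qed.

Lemma size_Ws4 k : 4 <= size (Ws k).
Proof. by rewrite size_Ws expnS expnS; have := expn_gt0 2 k; lia. Qed.

Lemma nth_Ws_rec k q : q < 2 * size (Ws k) ->
  nth dl (Ws k.+1) q =
  if q == 0 then (false, true)
  else if q <= size (Ws k) then flipl (nth dl (Ws k) (size (Ws k) - q))
  else nth dl (Ws k) (q - size (Ws k)).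
Proof.
move=> qL; case: q qL => [|q] qL //=.
have L4 := size_Ws4 k.
rewrite nth_cat size_rev size_map.
case: ifP => h.
- rewrite nth_rev; last by rewrite size_map.
  have -> : size [seq flipl i | i <- Ws k] = size (Ws k) by apply: size_map.
  rewrite (nth_map dl); last lia.
  by congr (flipl (nth _ _ _)).
- rewrite nth_behead; congr nth; lia.
Qed.

Lemma Ws_type k q : q < size (Ws k) -> (nth dl (Ws k) q).1 = odd q.
Proof.
elim: k q => [|k IH] q qL.
  by case: q qL => [|[|[|[|q]]]].
have L4 := size_Ws4 k.
have Le : ~~ odd (size (Ws k)) by rewrite size_Ws expnS oddM.
have qL' : q < 2 * size (Ws k) by move: qL; rewrite size_Ws expnS -size_Ws.
rewrite nth_Ws_rec //.
case: eqP => [->|q0] //.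
case: ifP => h.
- rewrite /flipl /= IH; last lia.
  rewrite oddB //; move: Le; case: (odd (size (Ws k))) => //= _.
- have h' : size (Ws k) < q by rewrite ltnNge h.
  rewrite IH; last lia.
  rewrite oddB; last lia.
  by move: Le; case: (odd (size (Ws k))) => //= _; rewrite addbF.
Qed.

Definition sg k q := (nth dl (Ws k) q).2.
Definition alt4 (a b c d : bool) := [&& a != b, b != c & c != d].

Lemma size_WsS k : size (Ws k.+1) = 2 * size (Ws k).
Proof. by rewrite !size_Ws [in LHS]expnS. Qed.

Lemma sg_rec0 k : sg k.+1 0 = true.
Proof. by []. Qed.

Lemma sg_rec1 k q : 0 < q <= size (Ws k) -> sg k.+1 q = ~~ sg k (size (Ws k) - q).
Proof.
move=> /andP [q0 qL]; rewrite /sg nth_Ws_rec; last lia.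
by rewrite ifF ?qL //; apply/eqP; lia.
Qed.

Lemma sg_rec2 k q : size (Ws k) < q < 2 * size (Ws k) -> sg k.+1 q = sg k (q - size (Ws k)).
Proof.
move=> /andP [q0 qL]; rewrite /sg nth_Ws_rec //.
rewrite ifF; last by apply/eqP; lia.
by rewrite ifF //; apply/negbTE; rewrite -ltnNge.
Qed.

Lemma alt4_rev a b c d : alt4 (~~ d) (~~ c) (~~ b) (~~ a) = alt4 a b c d.
Proof. by case: a; case: b; case: c; case: d. Qed.

Lemma sg_inv k : let L := size (Ws k) in
  [/\ sg k 0 = true /\ sg k 1 = false /\ sg k 3 = true, sg k (L - 1) = true,
      sg k (L - 2) = false, sg k (L - 3) = false &
      forall q, q + 3 < L -> ~~ alt4 (sg k q) (sg k q.+1) (sg k q.+2) (sg k q.+3)].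
Proof.
elim: k => [|k [[h0 [h1 h3]] e1 e2 e3 IH]].
  split => //; case=> [|q] //=; lia.
cbv zeta; rewrite size_WsS; set L := size (Ws k).
have L4 : 3 < L := size_Ws4 k.
have r1 : forall q, 0 < q <= L -> sg k.+1 q = ~~ sg k (L - q) by move=> q; apply: sg_rec1.
have r2 : forall q, L < q < 2 * L -> sg k.+1 q = sg k (q - L) by move=> q; apply: sg_rec2.
split; first split; [by [] | split |..].
- rewrite r1; last lia. by rewrite e1.
- rewrite r1; last lia. by rewrite e3.
- rewrite r2; last lia. by have -> : 2 * L - 1 - L = L - 1 by lia.
- rewrite r2; last lia. by have -> : 2 * L - 2 - L = L - 2 by lia.
- rewrite r2; last lia. by have -> : 2 * L - 3 - L = L - 3 by lia.
move=> q qL.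
case: (posnP q) => [->|q0].
  rewrite sg_rec0 (r1 1) ?(r1 2) ?(r1 3); try lia.
  by rewrite e1 e2 e3.
case: (leqP (q + 3) L) => qa.
  rewrite !r1; try lia.
  rewrite -alt4_rev !negbK.
  have := IH (L - q - 3) ltac:(lia).
  have a1 : L - q - 3 = L - q.+3 by lia.
  have a2 : (L - q.+3).+1 = L - q.+2 by lia.
  have a3 : (L - q.+3).+2 = L - q.+1 by lia.
  have a4 : (L - q.+3).+3 = L - q by lia.
  by rewrite a1 a4 a3 a2.
case: (ltnP L q) => qb.
  rewrite !r2; try lia.
  have := IH (q - L) ltac:(lia).
  have a2 : (q - L).+1 = q.+1 - L by lia.
  have a3 : (q - L).+2 = q.+2 - L by lia.
  have a4 : (q - L).+3 = q.+3 - L by lia.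
  by rewrite a4 a3 a2.
(* crossing windows: q in {L-2, L-1, L} *)
have eL1 : sg k.+1 (L - 1) = true by rewrite r1; [rewrite (_ : L - (L - 1) = 1); [rewrite h1|lia]|lia].
have eL : sg k.+1 L = false by rewrite r1; [rewrite subnn h0|lia].
have eL1' : sg k.+1 L.+1 = false by rewrite r2; [rewrite (_ : L.+1 - L = 1); [rewrite h1|lia]|lia].
have eL3 : sg k.+1 (L + 3) = true by rewrite r2; [rewrite (_ : L + 3 - L = 3); [rewrite h3|lia]|lia].
have : (q = L - 2) \/ (q = L - 1) \/ (q = L) by lia.
case=> [->|[->|->]].
- rewrite (_ : (L - 2).+3 = L.+1); last lia.
  rewrite (_ : (L - 2).+2 = L); last lia.
  rewrite (_ : (L - 2).+1 = L - 1); last lia.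
  by rewrite eL1 eL eL1' /alt4 /= andbF.
- rewrite (_ : (L - 1).+2 = L.+1); last lia.
  rewrite (_ : (L - 1).+1 = L); last lia.
  by rewrite eL1 eL eL1' /alt4 /=.
- rewrite (_ : L.+3 = L + 3); last lia.
  by rewrite eL eL1' eL3 /alt4 /=; case: (sg k.+1 L.+2).
Qed.

End WordsD.

Section Letters.
Variable gT : finGroupType.
Variables s t : gT.
Local Open Scope group_scope.

Definition ev (l : bool * bool) : gT :=
  let g := if l.1 then t else s in if l.2 then g else g^-1.

Definition prodw (w : seq gT) : gT := foldr (fun a b => a * b) 1 w.

Lemma prodw_cat u w : prodw (u ++ w) = prodw u * prodw w.
Proof. by elim: u => [|a u IH] /=; rewrite ?mul1g // IH mulgA. Qed.

Lemma prodw_rcons u a : prodw (rcons u a) = prodw u * a.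
Proof. by rewrite -cats1 prodw_cat /= mulg1. Qed.

Lemma prodw_revV w : prodw (rev (map invg w)) = (prodw w)^-1.
Proof.
elim: w => [|a w IH] /=; first by rewrite invg1.
by rewrite rev_cons prodw_rcons IH invMg.
Qed.

Lemma ev_flip l : ev (flipl l) = (ev l)^-1.
Proof. by case: l => [[] []] /=; rewrite ?invgK. Qed.

Lemma prodw_cons a w : prodw (a :: w) = a * prodw w.
Proof. by []. Qed.

Lemma prod_Ws k : prodw (map ev (Ws k)) = icomm s t k.+1.
Proof.
elim: k => [|k IH]; first by rewrite /= mulg1 !mulgA.
rewrite (_ : icomm s t k.+2 = s * (icomm s t k.+1)^-1 * s^-1 * icomm s t k.+1) //.
rewrite -IH.
have hb : prodw (map ev (Ws k)) = s * prodw (map ev (behead (Ws k))) by rewrite {1}Ws_cons.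
rewrite [Ws k.+1]/= map_cons map_cat map_rev -map_comp.
have -> : [seq (ev \o flipl) i | i <- Ws k] = map invg (map ev (Ws k)).
  by rewrite -map_comp; apply: eq_map => l /=; rewrite ev_flip.
rewrite prodw_cons prodw_cat prodw_revV hb.
by rewrite -(mulgA _ s^-1) mulKg mulgA.
Qed.
End Letters.

Section Forced.
Variable gT : finGroupType.
Variables s t : gT.
Variable E : gT -> gT -> Prop.
Hypothesis Esym : forall a b, E a b -> E b a.
Hypothesis Etrans : forall a b c, E a b -> E b c -> E a c.
Local Open Scope group_scope.

Lemma forced (b e0 e1 e2 e3 : bool) : ~~ alt4 e0 e1 e2 e3 ->
  E (ev s t (b, ~~ e0)) (ev s t (~~ b, e1)) ->
  E (ev s t (~~ b, ~~ e1)) (ev s t (b, e2)) ->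
  E (ev s t (b, ~~ e2)) (ev s t (~~ b, e3)) -> E s t^-1.
Proof.
case: b; case: e0; case: e1; case: e2; case: e3; rewrite /alt4 /ev /= => // _ H1 H2 H3;
  eauto 7.
Qed.
End Forced.

Section Key.
Variable gT : finGroupType.
Variable S : {set gT}.
Variable r : nat.
Variable v : gT.
Hypothesis S1 : (1 \notin S)%g.
Hypothesis SV : forall a, a \in S -> (a^-1)%g \in S.
Variables s t : gT.
Hypothesis sS : s \in S.
Hypothesis tS : t \in S.
Hypothesis st1 : s != t.
Hypothesis st2 : s != (t^-1)%g.
Variable m : nat.
Hypothesis m0 : 0 < m.
Hypothesis cm : icomm s t m = 1%g.
Hypothesis mmin : forall m', 0 < m' < m -> icomm s t m' != 1%g.
Hypothesis mr : 2 ^ m.+1 <= r.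

Local Open Scope group_scope.

Definition Erel a b := conn S r v (v * a) (v * b).

Let k := m.-1.
Let W := Ws k.
Let w := map (ev s t) W.
Let L := size W.
Let x p := v * prodw (take p w).

Lemma LE : L = (2 ^ m.+1)%N.
Proof. by rewrite /L /W size_Ws /k prednK. Qed.

Lemma evS l : ev s t l \in S.
Proof. by case: l => [[] []]; rewrite /ev /= ?SV. Qed.

Lemma ev1 l : ev s t l != 1.
Proof. by apply/eqP => e; move: S1; rewrite -e evS. Qed.

Lemma nthw p : p < L -> nth 1 w p = ev s t (nth dl W p).
Proof. by move=> pL; rewrite /w (nth_map dl). Qed.

Lemma xS p : p < L -> x p.+1 = x p * ev s t (nth dl W p).
Proof.
move=> pL; rewrite /x (take_nth 1); last by rewrite size_map.
by rewrite prodw_rcons mulgA nthw.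
Qed.

Lemma nthW p : p < L -> nth dl W p = (odd p, sg k p).
Proof. by move=> pL; rewrite /sg -(@Ws_type k) //; rewrite /W; case: nth. Qed.

Lemma cwx : cw S r v L x.
Proof.
split.
- by rewrite /x take0 /= mulg1.
- rewrite /x take_oversize; last by rewrite size_map.
  by rewrite prod_Ws /k prednK // cm mulg1.
- by rewrite LE.
- move=> p pL; rewrite xS // /cay.
  rewrite -{1}(mulg1 (x p)) (inj_eq (mulgI _)) eq_sym ev1 /=.
  by rewrite mulgA mulVg mul1g evS.
Qed.

Lemma turn q : 0 < q < L -> conn S r (x q) (x q.-1) (x q.+1) ->
  Erel (ev s t (flipl (nth dl W q.-1))) (ev s t (nth dl W q)).
Proof.
move=> /andP [q0 qL] H; apply: (conn_shift (c := x q)).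
have e1 : x q.+1 = x q * ev s t (nth dl W q) by rewrite xS.
have e2 : x q.-1 = x q * ev s t (flipl (nth dl W q.-1)).
  have := xS (_ : q.-1 < L); rewrite prednK // => ->; last lia.
  by rewrite ev_flip mulgK.
by rewrite -e1 -e2.
Qed.

Ltac ctr st1 st2 e :=
  first [ by move: st1; rewrite e eqxx | by move: st2; rewrite e eqxx
        | by move: st1; rewrite -e eqxx | by move: st2; rewrite -e eqxx
        | by move: st2; rewrite e invgK eqxx | by move: st2; rewrite -e invgK eqxx
        | by move: st1; rewrite e invgK eqxx | by move: st1; rewrite -e invgK eqxx ].

Lemma two_false b e0 e1 : ev s t (b, e0) * ev s t (~~ b, e1) = 1 -> False.
Proof.
move/eqP; rewrite mulg_eq1 => /eqP.
case: b; case: e0; case: e1; rewrite /ev /= ?invgK => e;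
  first [ ctr st1 st2 e | move/invg_inj: e => e; ctr st1 st2 e
        | have e' := f_equal invg e; rewrite ?invgK in e'; ctr st1 st2 e' ].
Qed.

Lemma ev_cyc b e : ev s t (b, e) \in <[if b then t else s]>.
Proof. by rewrite /ev /=; case: e; rewrite ?groupV cycle_id. Qed.

Lemma three_comm b e0 e1 e2 :
  ev s t (b, e0) * ev s t (~~ b, e1) * ev s t (b, e2) = 1 -> commute s t.
Proof.
move=> e.
have Hm : ev s t (~~ b, e1) \in <[if b then t else s]>.
  have -> : ev s t (~~ b, e1) = (ev s t (b, e0))^-1 * (ev s t (b, e2))^-1.
    set a := ev s t (b, e0); set c := ev s t (b, e2); set y := ev s t (~~ b, e1).
    have -> : y = a^-1 * (a * y * c) * c^-1 by rewrite -!mulgA mulgV mulg1 mulKg.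
    by rewrite e mulg1.
  by rewrite groupM ?groupV ?ev_cyc.
have Hh : (if ~~ b then t else s) \in <[if b then t else s]>.
  by move: Hm {e}; rewrite /ev /=; case: e1; rewrite ?groupV.
case: b Hh {Hm e} => /= /cycleP [i ->].
- by apply: commute_sym; apply: commuteX.
- by apply: commuteX.
Qed.

Lemma comm_icomm1 : commute s t -> icomm s t 1 = 1.
Proof.
move=> c; by rewrite /= (commuteV c) mulgK mulVg.
Qed.


Lemma Erel_sym a b : Erel a b -> Erel b a.
Proof. exact: conn_sym. Qed.
Lemma Erel_trans a b c : Erel a b -> Erel b c -> Erel a c.
Proof. exact: conn_trans. Qed.

Lemma letter_ne p : p < L -> x p.+1 != x p.
Proof.
move=> pL; rewrite xS // -{2}(mulg1 (x p)) (inj_eq (mulgI _)).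
exact: ev1.
Qed.

Lemma eq_r2 (y a b : gT) : y = y * a * b -> a * b = 1.
Proof. by move=> e; apply: (mulgI y); rewrite mulg1 mulgA -e. Qed.

Lemma eq_r3 (y a b c : gT) : y = y * a * b * c -> a * b * c = 1.
Proof. by move=> e; apply: (mulgI y); rewrite mulg1 !mulgA -e. Qed.

Lemma key : Erel s t^-1.
Proof.
have L4 : (4 <= L)%N by rewrite /L /W; apply: size_Ws4.
have [i [j [ij jL xij H]]] := min_window cwx (leq_trans (isT : (0 < 4)%N) L4).
have nW := nthW.
case: (ltnP (i.+3) j) => hj.
-
  have c1 : (0 < i.+1 < L)%N by lia.
  have c2 : (0 < i.+2 < L)%N by lia.
  have c3 : (0 < i.+3 < L)%N by lia.
  have d1 : (i < i.+1 < j)%N by lia.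
  have d2 : (i < i.+2 < j)%N by lia.
  have d3 : (i < i.+3 < j)%N by lia.
  have t1 := turn c1 (H _ d1).
  have t2 := turn c2 (H _ d2).
  have t3 := turn c3 (H _ d3).
  rewrite /= !nW /flipl /= in t1 t2 t3; try lia.
  rewrite ?negbK in t2 t3.
  case: (sg_inv k) => _ _ _ _ na.
  apply: (forced Erel_sym Erel_trans (na i _) t1 t2 t3).
  rewrite -/W -/L; lia.
- exfalso.
  have xS' : forall p, (p < L)%N -> x p.+1 = x p * ev s t (odd p, sg k p).
    by move=> p pL; rewrite xS // nW.
  case: (ltngtP i.+1 j) => [h2|h1|h1]; last first.
  + have iL : (i < L)%N by lia.
    by move: (letter_ne iL); rewrite h1 -xij eqxx.
  + lia.
  case: (ltngtP i.+2 j) => [h3|h2'|h2']; last first.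
  + have iL : (i.+1 < L)%N by lia.
    move: xij; rewrite -h2' xS' // xS'; last lia.
    move/eq_r2; rewrite /=.
    exact: two_false.
  + lia.
  have ej : j = i.+3 by lia.
  case: (posnP k) => k0.
  +
    have L4' : L = 4%N by rewrite /L /W k0.
    have : i = 0%N \/ i = 1%N by lia.
    case: (cwx) => x0 xL _ _.
    case=> ei.
    * have h33 : (3 < L)%N by lia.
      move: (letter_ne h33); rewrite (_ : 4%N = L) // xL -x0.
      by rewrite (_ : 0%N = i) // xij ej ei eqxx.
    * have h0 : (0 < L)%N by lia.
      move: (letter_ne h0); rewrite x0 -xL.
      rewrite (_ : L = j); last lia.
      by rewrite -xij ei eqxx.
  + have iL : (i.+2 < L)%N by lia.
    move: xij; rewrite ej xS' // xS'; last lia.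
    rewrite xS'; last lia.
    move/eq_r3; rewrite /= negbK => e.
    have := comm_icomm1 (three_comm e).
    by apply/eqP; apply: mmin; rewrite /k in k0; lia.
Qed.

End Key.

Section ClaimA.
Variable gT : finGroupType.
Variable S : {set gT}.
Variable r : nat.
Local Open Scope group_scope.

Lemma claimA v z : ball_vertex S r v z -> z != v ->
  exists a, a \in S /\ conn S r v (v * a) z.
Proof.
case=> p [/and3P [pp lp sp] zin] zv.
pose f k := nth v (v :: p) k.
have cf : cw S r v (size p) f.
  split => //.
  - by rewrite /f -last_nth (eqP lp).
  - move=> k kL; move/(pathP v): pp => /(_ k kL).
    by rewrite /f [nth v (v :: p) k.+1]/=.
have [q [q0 qL fq]] : exists q, [/\ 0 < q, q <= size p & f q = z].
  have zp : z \in p by move: zin; rewrite inE (negbTE zv).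
  exists (index z p).+1; split => //.
  - by rewrite index_mem.
  - by rewrite /f /= nth_index.
rewrite -fq; rewrite -fq in zv; clear fq.
elim: q q0 qL zv => // q IH _ qL zv.
have edge : forall a, a \in S -> f q.+1 = v * a -> exists a, a \in S /\ conn S r v (v * a) (f q.+1).
  by move=> a aS e; exists a; split => //; rewrite e; exact: conn_refl.
case: (eqVneq (f q) v) => fqv.
- case: cf => _ _ _ ce; have := ce q qL; rewrite /cay fqv => /andP [_ h].
  by apply: (edge _ h); rewrite mulKVg.
- have q0 : 0 < q.
    by case: q {IH qL zv edge} fqv => //; case: cf => -> _ _ _; rewrite eqxx.
  have [a [aS ca]] := IH q0 (ltnW qL) fqv.
  exists a; split => //; apply: (conn_trans ca).
  apply: rt_step; split => //; split => //.
  exact: (cw_edge cf qL).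
Qed.
End ClaimA.

Section KeyE.
Local Open Scope group_scope.
Lemma keyE (gT : finGroupType) (S : {set gT}) (n r : nat) (v : gT) :
  1 \notin S -> (forall a, a \in S -> a^-1 \in S) -> (0 < n)%N -> nil_class_le gT n ->
  (2 ^ n.+1 <= r)%N ->
  forall a b, a \in S -> b \in S -> a != b -> a != b^-1 -> Erel S r v a b^-1.
Proof.
move=> S1 SV n0 nc nr a b aS bS ab1 ab2.
pose P k := (0 < k)%N && (icomm a b k == 1).
have Pn : exists k, P k by exists n; rewrite /P (nc a b ab1 ab2) eqxx andbT.
case: (ex_minnP Pn) => m /andP [m0 /eqP cm] mmin.
apply: (key v S1 SV aS bS ab1 ab2 m0 cm).
- move=> m' /andP [m'0 m'm]; apply/negP => /eqP c.
  have := mmin m'; rewrite /P m'0 c eqxx => /(_ isT); lia.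
- have mn : (m <= n)%N by apply: mmin; rewrite /P (nc a b ab1 ab2) eqxx andbT.
  apply: leq_trans nr; rewrite leq_exp2l //.
Qed.

End KeyE.

Unset Implicit Arguments.
Local Open Scope group_scope.

Theorem theorem4p1 (gT : finGroupType) (S : {set gT}) (n r : nat) :
  generating_set S -> (0 < n)%N -> nil_class_le gT n -> (2 ^ n.+1 <= r)%N ->
  (exists v : gT, local_cutvertex S r v) ->
  [/\ cay_is_cycle S, (r < #|gT|)%N & cyclic [set: gT]].
Proof.
case=> S1 SV gen n0 nc nr [v [x0 [y0 [bx x0v byy y0v ncon]]]].
have [a [aS ca]] := claimA bx x0v.
have [b [bS cb]] := claimA byy y0v.
case: (boolP [exists s : gT, exists t : gT, [&& s \in S, t \in S, s != t & s != t^-1]])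
  => [/existsP [s /existsP [t /and4P [sS tS st1 st2]]] | noP].
- exfalso; apply: ncon.
  have kE := keyE v S1 SV n0 nc nr.
  have allE : forall c d, c \in S -> d \in S -> Erel S r v c d.
    move=> c d cS dS.
    case: (eqVneq c d) => [->|cd]; first exact: conn_refl.
    case: (eqVneq c d^-1) => [cdi|cdi]; last first.
      by have := kE c d^-1 cS (SV _ dS) cdi; rewrite invgK; apply.
    have [u [uS u1 u2]] : exists u, [/\ u \in S, u != c & u != c^-1].
      case: (eqVneq s c) => [sc|sc].
        exists t; split => //.
        + by apply: contraNneq st1 => ->; rewrite sc.
        + by apply: contraNneq st2 => ->; rewrite sc invgK.
      case: (eqVneq s c^-1) => [sc'|sc'].
        exists t; split => //.
        + by apply: contraNneq st2 => ->; rewrite sc'.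
        + by apply: contraNneq st1 => ->; rewrite sc'.
      by exists s.
    have E1 : Erel S r v c u.
      have := kE c u^-1 cS (SV _ uS); rewrite invgK; apply.
      + by apply: contraNneq u2 => ->; rewrite invgK.
      + by rewrite eq_sym.
    have E2 : Erel S r v u d.
      have := kE u d^-1 uS (SV _ dS); rewrite invgK; apply.
      + by rewrite -cdi.
      + by rewrite cdi invgK in u2 *.
    exact: conn_trans E1 E2.
  exact: conn_trans (conn_sym ca) (conn_trans (allE a b aS bS) cb).
- have Sab : forall u, u \in S -> u = a \/ u = a^-1.
    move=> u uS; move/existsPn: noP => /(_ u) /existsPn /(_ a).
    by rewrite uS aS /= negb_and !negbK => /orP [/eqP|/eqP]; tauto.
  have Gs : [set: gT] = <[a]>.
    have sub : <<S>> \subset <[a]>.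
      by rewrite gen_subG; apply/subsetP => u /Sab [->|->]; rewrite ?groupV cycle_id.
    by apply/eqP; rewrite eqEsubset -{1}gen sub subsetT.
  have cyc : cyclic [set: gT] by apply/cyclicP; exists a.
  have a1 : a != 1 by apply: contraNneq S1 => <-.
  have edge : forall g, cay S g (g * a).
    move=> g; rewrite /cay -{1}(mulg1 g) (inj_eq (mulgI _)) eq_sym a1 /=.
    by rewrite mulKg.
  case: (eqVneq a a^-1) => aa.
  + exfalso.
    have two : forall g, g = 1 \/ g = a.
      move=> g; have : g \in <[a]> by rewrite -Gs inE.
      case/cycleP => i ->; elim: i => [|i [IH|IH]].
      * by left; rewrite expg0.
      * by right; rewrite expgSr IH mul1g.
      * by left; rewrite expgSr IH {2}aa mulgV.
    have xv : forall z, z != v -> z = v * a.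
      move=> z zv; case: (two (v^-1 * z)) => e.
      * by move: zv; rewrite -(mulKVg v z) e mulg1 eqxx.
      * by rewrite -e mulKVg.
    apply: ncon; rewrite (xv _ x0v) (xv _ y0v); exact: rt_refl.
  + split => //.
    * split.
      - move=> x y; have : x^-1 * y \in <[a]> by rewrite -Gs inE.
        case/cycleP => i e.
        have -> : y = x * a ^+ i by rewrite -e mulKVg.
        elim: i {e} => [|i IH]; first by rewrite expg0 mulg1 connect0.
        apply: connect_trans IH _; apply: connect1.
        by rewrite expgSr mulgA edge.
      - move=> x.
        have -> : [set y | cay S x y] = [set x * a; x * a^-1].
          apply/setP => y; rewrite !inE.
          apply/idP/idP.
          + rewrite /cay; case/andP => _ /Sab [e|e]; apply/orP; [left|right];
              by apply/eqP; rewrite -e mulKVg.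
          + case/orP => /eqP ->; first exact: edge.
            rewrite /cay -{1}(mulg1 x) (inj_eq (mulgI _)) eq_sym invg_eq1 a1 /=.
            by rewrite mulKg SV.
        by rewrite cards2 (inj_eq (mulgI _)) aa.
    * rewrite ltnNge; apply/negP => Nr.
      set N := #[a].
      have NG : N = #|gT| by rewrite /N -cardsT Gs.
      pose f k := v * a ^+ k.
      have cf : cw S r v N f.
        split.
        - by rewrite /f expg0 mulg1.
        - by rewrite /f expg_order mulg1.
        - by rewrite NG.
        - by move=> k kN; rewrite /f expgSr mulgA edge.
      have fne : forall k, (0 < k < N)%N -> f k != v.
        move=> k /andP [k0 kN]; rewrite /f -{2}(mulg1 v) (inj_eq (mulgI _)) -order_dvdn.
        by apply/negP => /dvdn_leq; rewrite /N; lia.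
      have idx : forall z, z != v -> exists i, (0 < i < N)%N /\ z = f i.
        move=> z zv; have : v^-1 * z \in <[a]> by rewrite -Gs inE.
        case/cyclePmin => i iN e; exists i; split; last by rewrite /f -e mulKVg.
        rewrite iN andbT lt0n; apply: contraNneq zv => i0.
        by rewrite -(mulKVg v z) e i0 expg0 mulg1.
      have [i [iN ex]] := idx x0 x0v.
      have [j [jN ey]] := idx y0 y0v.
      apply: ncon; rewrite ex ey.
      case: (leqP i j) => ij.
      - apply: (cw_chain cf ij); first lia.
        by move=> k /andP [h1 h2]; apply: fne; lia.
      - apply: conn_sym; apply: (cw_chain cf (ltnW ij)); first lia.
        by move=> k /andP [h1 h2]; apply: fne; lia.
Qed.
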